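(* Assume $\log_2 n$ and $\log_2\log_2 n$ are integers. Consider a perfect binary tree of height $h=\log_2 n-\log_2\log_2 n$ (so it has $n/\log_2 n$ leaves) in which every node stores a randomized splitter. At most $n$ processes each start at the root and repeatedly call $\mathrm{split}()$ on the splitter of their current node: on $\mathrm{stop}$ the process leaves the tree; on $\mathrm{left}$/$\mathrm{right}$ it moves to the left/right child (a process reaching a leaf node is said to visit it). Then for any (strong adaptive) adversary, with probability at least $1-1/n$ every leaf is visited by at most $4\log_2 n$ processes.
   Context: Randomized splitter: an object with a one-time operation $\mathrm{split}()$ returning $\mathrm{stop}$, $\mathrm{left}$ or $\mathrm{right}$, such that a lone caller stops, and every caller that does not stop turns left or right with probability $1/2$ each, independently of all other processes and of the schedule. A strong adaptive adversary chooses each next step based on the entire past execution, including all coin-flip outcomes. *)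

(* Defs.v *)
From mathcomp Require Import all_boot all_order all_algebra.
Set Implicit Arguments. Unset Strict Implicit. Unset Printing Implicit Defensive.

(* Randomness (deferred decisions): every process i has a fresh fair coin
   for each depth d < h, namely the d-th entry of [w i]; it is used (and
   revealed) exactly when process i calls split at depth d and the splitter
   does not return stop.  A node is identified by its path from the root
   (a sequence of bools, false = left, true = right); leaves are the paths
   of length h. *)

Definition coins (k h : nat) := {ffun 'I_k -> h.-tuple bool}.

(* An event of the execution: process i called split and got
   stop (None) or left/right (Some false / Some true). *)
Definition event (k : nat) := ('I_k * option bool)%type.

(* A (strong adaptive) adversary: given the full past execution
   (including all revealed coin flips), it chooses the next process
   to take a step and whether its split() call returns stop (true) or
   turns left/right (false), or idles (None). *)
Definition adversary (k : nat) := seq (event k) -> option ('I_k * bool).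

Record state (k : nat) := State {
  pos : 'I_k -> seq bool;
  stopped : 'I_k -> bool;
  hist : seq (event k)
}.

Definition init_state (k : nat) : state k :=
  State (fun _ => [::]) (fun _ => false) [::].

Definition active (k h : nat) (s : state k) (i : 'I_k) : bool :=
  ~~ stopped s i && (size (pos s i) < h).

Definition step (k h : nat) (A : adversary k) (w : coins k h)
    (s : state k) : state k :=
  match A (hist s) with
  | Some (i, stp) =>
      if active h s i then
        if stp then
          State (pos s) (fun j => if j == i then true else stopped s j)
                (rcons (hist s) (i, None))
        else
          let c := nth false (w i) (size (pos s i)) in
          State (fun j => if j == i then rcons (pos s i) c else pos s j)
                (stopped s) (rcons (hist s) (i, Some c))
      else s
  | None => s
  end.

(* Every effective step either stops a process or moves it one level
   down, so k*h steps suffice for any execution to complete. *)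
Definition run (k h : nat) (A : adversary k) (w : coins k h) : state k :=
  iter (k * h) (step A w) (init_state k).

Definition leaf_visits (k h : nat) (s : state k) (l : h.-tuple bool) : nat :=
  #|[set i : 'I_k | pos s i == val l]|.

Definition all_leaves_light (k h : nat) (bound : nat) (s : state k) : bool :=
  [forall l : h.-tuple bool, leaf_visits s l <= bound].
Arguments all_leaves_light {k} h bound s.

Definition prob_good (k : nat) (h bound : nat) (A : adversary k) : rat :=
  (#|[set w : coins k h | all_leaves_light h bound (run A w)]|%:R
     / #|{: coins k h}|%:R)%R.
Arguments prob_good {k} h bound A.

(* Main.v *)
Require Import Defs.
From mathcomp Require Import all_boot all_order all_algebra zify ring lra.

Lemma prodP x : 2 ^ x * x ^ (2 * x) <= (\prod_(x.+1 <= i < (2*x).+1) i) ^ 2.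
Proof.
rewrite expnS expn1 {1}big_nat_rev -big_split /=.
rewrite big_nat_cond.
apply: leq_trans (_ : \prod_(x.+1 <= i < (2*x).+1 | (x.+1 <= i < (2 * x).+1) && true) (2 * x ^ 2) <= _).
  rewrite -big_nat_cond prod_nat_const_nat.
  have -> : (2 * x).+1 - x.+1 = x by lia.
  by rewrite expnMn -expnM mulnC.
apply: leq_prod => i /andP[/andP[h1 h2] _].
have -> : x.+1 + (2 * x).+1 - i.+1 = 3 * x + 1 - i by lia.
nia.
Qed.

Lemma fact_split x : (2 * x)`! = x`! * \prod_(x.+1 <= i < (2*x).+1) i.
Proof.
rewrite !fact_prod (big_cat_nat (n:=x.+1)) //=; lia.
Qed.

Lemma fact_pow2 c : 8 * (2 ^ c) ^ (2 * 2 ^ c) <= 8 ^ (2 ^ c) * ((2 ^ c)`!) ^ 2.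
Proof.
elim: c => [|c IH]; first by [].
rewrite expnS; set x := 2 ^ c in IH *.
rewrite fact_split expnMn.
have hP := prodP x.
set P := \prod_(_ <= _ < _) _ in hP *.
set F := x`! in IH *.
rewrite expnMn.
have e1 : 2 ^ (2 * (2 * x)) * x ^ (2 * (2 * x)) = 16 ^ x * (x ^ (2 * x)) ^ 2.
  rewrite -!expnM; congr (_ * _); [rewrite (_ : 16 = 2 ^ 4) // -expnM; congr (_ ^ _); lia | congr (_ ^ _); lia].
have e2 : 8 ^ (2 * x) = 8 ^ x * 8 ^ x by rewrite mulnC expnM expnS expn1 // -expnD addnn -mul2n mulnC expnM.
have e3 : 16 ^ x = 8 ^ x * 2 ^ x by rewrite -expnMn.
rewrite e1 e2 e3.
set X := x ^ (2 * x) in IH hP *.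
set A := 8 ^ x in IH *. set B := 2 ^ x in hP *.
have : 8 * X * (B * X) <= A * F ^ 2 * P ^ 2.
  by apply: leq_mul.
nia.
Qed.

Lemma ffact_le_exp n t : n ^_ t <= n ^ t.
Proof.
elim: t => [|t IH]; first by rewrite ffactn0.
rewrite ffactnSr expnS mulnC; apply: leq_mul => //; exact: leq_subr.
Qed.

Lemma fact4 b : 4 ^ (2 ^ b) * (2 ^ b) ^ (4 * 2 ^ b) <= (4 * 2 ^ b)`!.
Proof.
have := fact_pow2 b.+2.
set a := 2 ^ b.
have ex : 2 ^ b.+2 = 4 * a by rewrite !expnS mulnA.
rewrite ex => h.
have e1 : forall a, (4 * a) ^ (2 * (4 * a)) = 2 ^ (12 * a) * 2 ^ (4 * a) * (a ^ (4 * a)) ^ 2.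
  move=> y; rewrite expnMn -!expnM -expnD.
  have -> : 4 ^ (2 * (4 * y)) = 2 ^ (2 * (2 * (4 * y))) by rewrite [RHS]expnM.
  rewrite (_ : 2 * (2 * (4 * y)) = 12 * y + 4 * y); last lia.
  by rewrite [4 * y * 2]mulnC.
have e2 : 8 ^ (4 * a) = 2 ^ (12 * a).
  have -> : 12 * a = 3 * (4 * a) by lia.
  by rewrite [RHS]expnM.
have e3 : forall y Y, (4 ^ y * Y) ^ 2 = 2 ^ (4 * y) * Y ^ 2.
  move=> y Y; rewrite expnMn; congr (_ * _).
  rewrite -expnM (_ : 4 * y = 2 * (y * 2)); last lia.
  by rewrite [RHS]expnM.
rewrite e1 e2 in h. rewrite -leq_sqr e3.
have hQ : 0 < 2 ^ (12 * a) by rewrite expn_gt0.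
set Q := 2 ^ (12 * a) in hQ *. set R := 2 ^ (4 * a). set Y := (a ^ (4 * a)) ^ 2.
set Z := (4 * a)`! ^ 2 in h *.
have : Q * (R * Y) <= Q * Z by nia.
by rewrite leq_pmul2l.
Qed.

Lemma arith a b k : a = 2 ^ b -> k <= 2 ^ a ->
  2 ^ a * (2 ^ (a - b) * 'C(k, (4 * a).+1) * (2 ^ (a - b)) ^ (k - (4 * a).+1))
  <= (2 ^ (a - b)) ^ k.
Proof.
move=> Ha Hk.
have hba : b <= a by rewrite Ha; apply: ltnW; exact: ltn_expl.
set m := 2 ^ (a - b).
have hma : m * a = 2 ^ a by rewrite /m {2}Ha -expnD subnK.
have hm : 0 < m by rewrite expn_gt0.
set t := (4 * a).+1.
case: (ltnP k t) => hkt.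
  by rewrite bin_small // !(muln0, mul0n).
have -> : m ^ k = m ^ t * m ^ (k - t) by rewrite -expnD subnKC.
rewrite mulnA leq_pmul2r ?expn_gt0 //.
have hf : 0 < t`! by exact: fact_gt0.
rewrite -(leq_pmul2r hf) -!mulnA bin_ffact.
have h1 : k ^_ t <= (2 ^ a) ^ t.
  by apply: leq_trans (ffact_le_exp _ _) _; rewrite leq_exp2r.
have h2 := fact4 b. rewrite -Ha in h2.
have e : m ^ 2 * a ^ t * a = 4 ^ a * a ^ (4 * a).
  rewrite /t [a ^ _.+1]expnS.
  rewrite (_ : m ^ 2 * (a * a ^ (4 * a)) * a = (m * a) ^ 2 * a ^ (4 * a)); last by rewrite expnMn; ring.
  by rewrite hma -expnM (mulnC a 2) expnM.
have h3 : t`! = t * (4 * a)`! by rewrite factS.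
rewrite -hma in h1.
rewrite expnMn in h1.
have h4 : m ^ 2 * a ^ t * a <= t`! by rewrite e h3; apply: leq_trans h2 _; apply: leq_pmull.
rewrite -hma.
apply: leq_trans (_ : m * a * m * (m ^ t * a ^ t) <= _).
  by rewrite mulnA leq_mul2l h1 orbT.
rewrite (_ : m * a * m * (m ^ t * a ^ t) = m ^ t * (m ^ 2 * a ^ t * a)).
2: by ring.
by rewrite leq_mul2l h4 orbT.
Qed.
Section Count.
Variables (k h : nat).

Lemma inv_step (A : adversary k) (w : coins k h) (s : state k) :
  (forall i, pos s i = take (size (pos s i)) (w i)) ->
  forall i, pos (step A w s) i = take (size (pos (step A w s) i)) (w i).
Proof.
move=> H; rewrite /step; case: (A (hist s)) => [[i stp]|] //.
case: ifP => // act; case: stp => //= j.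
case: eqP => [->|_]; last exact: H.
move/andP: act => [_ lt]. rewrite size_rcons (take_nth false) ?size_tuple //.
by rewrite -H.
Qed.

Lemma run_inv (A : adversary k) (w : coins k h) i :
  pos (run A w) i = take (size (pos (run A w) i)) (w i).
Proof.
rewrite /run; elim: (k * h) i => [|n IH] i /=; first by rewrite take0.
exact: inv_step.
Qed.

Lemma leaf_le (A : adversary k) (w : coins k h) (l : h.-tuple bool) :
  leaf_visits (run A w) l <= #|[set i | w i == l]|.
Proof.
apply: subset_leq_card; apply/subsetP => i; rewrite !inE => /eqP E.
have := run_inv A w i; rewrite E size_tuple take_oversize ?size_tuple // => e.
by apply/eqP; apply: val_inj.
Qed.

Lemma exists_sub (T : finType) (X : {set T}) t : t <= #|X| ->
  exists S : {set T}, S \subset X /\ #|S| = t.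
Proof.
elim: t => [|t IH] ht; first by exists set0; rewrite sub0set cards0.
have [S [sub cS]] := IH (ltnW ht).
have : 0 < #|X :\: S| by rewrite cardsD (setIidPr sub) cS subn_gt0.
case/card_gt0P => x; rewrite inE => /andP[xS xX].
exists (x |: S); split; first by rewrite subUset sub1set xX.
by rewrite cardsU1 xS cS.
Qed.

Lemma card_bigcup_le (I T : finType) (P : pred I) (F : I -> {set T}) :
  #|\bigcup_(i | P i) F i| <= \sum_(i | P i) #|F i|.
Proof.
apply: (big_ind2 (fun (U : {set T}) n => is_true (#|U| <= n))) => //; first by rewrite cards0.
move=> U1 n1 U2 n2 h1 h2; apply: leq_trans (leq_card_setU _ _) _.
exact: leq_add.
Qed.

Lemma foldr_prod (T : Type) (f : T -> nat) r : foldr muln 1 (map f r) = \prod_(x <- r) f x.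
Proof. by elim: r => [|x r IH]; rewrite ?big_nil ?big_cons //= IH. Qed.

Definition Ebad (l : h.-tuple bool) (S : {set 'I_k}) : {set coins k h} :=
  [set w : coins k h | [forall i in S, w i == l]].

Lemma card_Ebad l S : #|Ebad l S| <= (2 ^ h) ^ (k - #|S|).
Proof.
pose F : 'I_k -> pred (h.-tuple bool) := fun i => if i \in S then pred1 l else predT.
apply: leq_trans (_ : #|family F| <= _).
  apply: subset_leq_card; apply/subsetP => w; rewrite inE => /forall_inP H.
  apply/familyP => i; rewrite /F; case: ifP => iS //=; exact: H.
rewrite card_family /image_mem foldr_prod big_enum /=.
rewrite (eq_bigr (fun i => if i \in ~: S then 2 ^ h else 1)); last first.
  move=> i _; rewrite /F inE; case: (i \in S) => /=; first exact: card1.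
  by rewrite card_tuple card_bool.
rewrite -big_mkcond /=.
rewrite (eq_bigl (fun i => i \in ~: S)) ?prod_nat_const; last by move=> i.
have := cardsC S; rewrite card_ord => e.
have -> : #|~: S| = k - #|S| by lia.
by [].
Qed.

Lemma card_B t : #|[set w : coins k h | [exists l : h.-tuple bool, (t <= #|[set i | w i == l]|)%N]]|
  <= 2 ^ h * ('C(k, t) * (2 ^ h) ^ (k - t)).
Proof.
set Ss := [set S : {set 'I_k} | #|S| == t].
apply: (@leq_trans #|\bigcup_(l : h.-tuple bool) \bigcup_(S in Ss) Ebad l S|).
  apply: subset_leq_card; apply/subsetP => w; rewrite inE => /existsP [l hl].
  have [S [sub cS]] := @exists_sub _ _ _ hl.
  apply/bigcupP; exists l => //; apply/bigcupP; exists S; first by rewrite inE cS.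
  rewrite inE; apply/forall_inP => i iS; by have := subsetP sub i iS; rewrite inE.
apply: leq_trans (card_bigcup_le _ _ _ _) _.
apply: (@leq_trans (\sum_(l : h.-tuple bool) ('C(k,t) * (2^h)^(k-t)))); last first.
  rewrite (eq_bigl (fun l => l \in [set: h.-tuple bool])); last by move=> l; rewrite inE.
  by rewrite sum_nat_const cardsT card_tuple card_bool.
apply: leq_sum => l _.
apply: leq_trans (card_bigcup_le _ _ _ _) _.
have cd : #|Ss| = 'C(k, t) by rewrite card_draws card_ord.
rewrite -cd -sum_nat_const; apply: leq_sum => S; rewrite inE => /eqP <-; exact: card_Ebad.
Qed.
End Count.

Import GRing.Theory Num.Theory.
Local Open Scope ring_scope.

Theorem lemma8 (n a b : nat) (Hn : n = (2 ^ a)%N) (Ha : a = (2 ^ b)%N)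
  (k : nat) (Hk : (k <= n)%N) (A : adversary k) :
  1 - 1 / n%:R <= prob_good (a - b) (4 * a) A.
Proof.
set h := (a - b)%N. set t := (4 * a).+1.
have hn0 : (0 < n)%N by rewrite Hn expn_gt0.
have eN : #|{: coins k h}| = ((2 ^ h) ^ k)%N by rewrite card_ffun card_tuple card_bool card_ord.
set G := [set w : coins k h | all_leaves_light h (4 * a) (run A w)].
set B := [set w : coins k h | [exists l : h.-tuple bool, (t <= #|[set i | w i == l]|)%N]].
have sub : ~: G \subset B.
  apply/subsetP => w; rewrite !inE /all_leaves_light negb_forall => /existsP [l hl].
  apply/existsP; exists l; rewrite -ltnNge in hl; exact: leq_trans hl (@leaf_le k h A w l).
have hc : (n * #|~: G| <= #|{: coins k h}|)%N.
  have Hk2 : (k <= 2 ^ a)%N by rewrite -Hn.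
  rewrite eN.
  refine (leq_trans _ (arith _ _ _ Ha Hk2)).
  rewrite Hn leq_mul2l; apply/orP; right.
  apply: leq_trans (subset_leq_card sub) _.
  by rewrite -mulnA; exact: card_B.
have hg := cardsC G.
have hN : (0 < #|{: coins k h}|)%N by rewrite eN !expn_gt0.
rewrite /prob_good -/h -/G.
move: hc hg hN; set N := #|{: coins k h}|; set g := #|G|; set c := #|~: G| => hc hg hN.
have hNr : (0 : rat) < N%:R by rewrite ltr0n.
have hnr : (0 : rat) < n%:R by rewrite ltr0n.
have h1 : (c%:R : rat) <= N%:R / n%:R by rewrite ler_pdivlMr // -natrM ler_nat mulnC.
have h2 : (N%:R : rat) = g%:R + c%:R by rewrite -natrD hg.
rewrite ler_pdivlMr // mulrBl mul1r.
rewrite mul1r [_^-1 * _]mulrC.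
lra.
Qed.
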